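(* Let $m\ge 2$, let $A\in\mathbb{R}^{m\times m}$ be a symmetric matrix with zero diagonal and nonnegative entries, and let $k\in\{1,\ldots,\lfloor m/2\rfloor\}$. Let $A_k$ be the $(2m-2k)\times(2m-2k)$ symmetric matrix with zero diagonal given in block form by \[ A_k:=\begin{bmatrix} A & \mathbf{1}_{m,m-2k}\\ \mathbf{1}_{m-2k,m} & \mathbf{0}\end{bmatrix}, \] where $\mathbf{1}_{p,q}$ is the $p\times q$ matrix all of whose entries equal $1$ and $\mathbf{0}$ is the $(m-2k)\times(m-2k)$ zero matrix. Then \[ \mathrm{haf}_k A=\frac{\mathrm{haf}\, A_k}{(m-2k)!}. \]
   Context: For a real symmetric $2n\times 2n$ matrix $C=[c_{ij}]$, let $\mathcal{M}(K_{2n})$ be the set of perfect matchings of the complete graph on $\{1,\ldots,2n\}$, each written as $\{(i_1,j_1),\ldots,(i_n,j_n)\}$ with $i_l<j_l$; the hafnian is $\mathrm{haf}\, C:=\sum_{\{(i_1,j_1),\ldots,(i_n,j_n)\}\in\mathcal{M}(K_{2n})}\prod_{l=1}^n c_{i_lj_l}$ (and $\mathrm{haf}$ of the empty $0\times 0$ matrix is $1$). For $1\le 2k\le m$, $Q_{2k,m}$ is the set of $2k$-element subsets $\alpha=\{\alpha_1<\cdots<\alpha_{2k}\}$ of $\{1,\ldots,m\}$, $A[\alpha,\alpha]:=[a_{\alpha_i\alpha_j}]_{i,j=1}^{2k}$, and $\mathrm{haf}_k A:=\sum_{\alpha\in Q_{2k,m}}\mathrm{haf}\, A[\alpha,\alpha]$.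 *)

(* Defs.v *)
From HB Require Import structures.
From mathcomp Require Import all_boot all_order all_algebra.
Set Implicit Arguments. Unset Strict Implicit. Unset Printing Implicit Defensive.
Import Order.TTheory GRing.Theory Num.Theory.
Local Open Scope ring_scope.

Definition is_perfect_matching (N : nat) (M : {set 'I_N * 'I_N}) : bool :=
  [forall p in M, (p.1 < p.2)%N] &&
  [forall x : 'I_N, #|[set p in M | (p.1 == x) || (p.2 == x)]| == 1%N].

Definition haf (R : comNzRingType) (N : nat) (C : 'M[R]_N) : R :=
  \sum_(M : {set 'I_N * 'I_N} | is_perfect_matching M)
     \prod_(p in M) C p.1 p.2.

(* Entry of A at natural indices (0 outside the range). *)
Definition mx_at (R : comNzRingType) (m : nat) (A : 'M[R]_m) (i j : nat) : R :=
  match insub i, insub j with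
  | Some i', Some j' => A i' j'
  | _, _ => 0
  end.

Definition princ_submx (R : comNzRingType) (m k : nat) (A : 'M[R]_m)
    (alpha : {set 'I_m}) : 'M[R]_(2 * k) :=
  let s := sort leq [seq val x | x <- enum alpha] in
  \matrix_(i < 2 * k, j < 2 * k) mx_at A (nth 0%N s i) (nth 0%N s j).

Definition haf_k (R : comNzRingType) (m k : nat) (A : 'M[R]_m) : R :=
  \sum_(alpha : {set 'I_m} | #|alpha| == (2 * k)%N) haf (princ_submx k A alpha).

Definition A_k (R : comNzRingType) (m k : nat) (A : 'M[R]_m) : 'M[R]_(m + (m - 2 * k)) :=
  block_mx A (const_mx 1) (const_mx 1) 0.

(* Main.v *)
Require Import Defs.
From HB Require Import structures.
From mathcomp Require Import all_boot all_order all_algebra.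
Set Implicit Arguments. Unset Strict Implicit. Unset Printing Implicit Defensive.
Import Order.TTheory GRing.Theory Num.Theory.
Local Open Scope ring_scope.

Definition touch (T : eqType) (x : T) (p : T * T) := (p.1 == x) || (p.2 == x).

Definition PMon N (S : {set 'I_N}) (M : {set 'I_N * 'I_N}) : bool :=
  [forall p in M, (p.1 < p.2)%N] &&
  [forall x : 'I_N, #|[set p in M | touch x p]| == (x \in S)].

Lemma PMonP N (S : {set 'I_N}) M :
  PMon S M <->
  [/\ forall p, p \in M -> (p.1 < p.2)%N,
      forall x, x \in S -> exists2 p, p \in M & touch x p,
      forall x p, x \notin S -> p \in M -> ~~ touch x p &
      forall x p q, p \in M -> q \in M -> touch x p -> touch x q -> p = q].
Proof.
split.
- case/andP => /forall_inP H1 /forallP H2; split => //.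
  + move=> x xS; move: (H2 x); rewrite xS => /cards1P [p Hp].
    have : p \in [set p in M | touch x p] by rewrite Hp set11.
    by rewrite inE => /andP [pM tp]; exists p.
  + move=> x p xS pM; move: (H2 x); rewrite (negbTE xS) cards_eq0 => /eqP E.
    apply/negP => tp.
    have : p \in [set p in M | touch x p] by rewrite inE pM.
    by rewrite E inE.
  + move=> x p q pM qM tp tq.
    have xS : x \in S.
      apply/negPn/negP => xS; move: (H2 x); rewrite (negbTE xS) cards_eq0 => /eqP E.
      have : p \in [set p in M | touch x p] by rewrite inE pM.
      by rewrite E inE.
    move: (H2 x); rewrite xS => /cards1P [r Hr].
    have : p \in [set p in M | touch x p] by rewrite inE pM.
    have : q \in [set p in M | touch x p] by rewrite inE qM.
    by rewrite Hr !inE => /eqP -> /eqP ->.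
- case=> H1 H2 H3 H4; apply/andP; split; first by apply/forall_inP.
  apply/forallP => x; case: (boolP (x \in S)) => xS.
  + have [p pM tp] := H2 x xS; apply/cards1P; exists p; apply/setP => q.
    rewrite !inE; apply/andP/eqP => [[qM tq]|->]; first exact: H4 tq tp.
    by [].
  + rewrite cards_eq0; apply/eqP/setP => q; rewrite !inE.
    by apply/negbTE; rewrite negb_and; case: (q \in M) (H3 x q xS) => //= ->.
Qed.

Lemma pm_setT N (M : {set 'I_N * 'I_N}) : is_perfect_matching M = PMon setT M.
Proof.
rewrite /is_perfect_matching /PMon; congr (_ && _).
by apply: eq_forallb => x; rewrite in_setT.
Qed.

Lemma PMon_sub N (S : {set 'I_N}) M p : PMon S M -> p \in M -> p.1 \in S /\ p.2 \in S.
Proof.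
case/PMonP => _ _ H3 _ pM; split; apply/negPn/negP => xS; move: (H3 _ _ xS pM);
  by rewrite /touch eqxx ?orbT.
Qed.

Definition V N (M : {set 'I_N * 'I_N}) := [set x | [exists p in M, touch x p]].

Lemma PMon_V N (S : {set 'I_N}) M : PMon S M -> V M = S.
Proof.
case/PMonP => _ H2 H3 _; apply/setP => x; rewrite inE.
case: (boolP (x \in S)) => xS.
  by have [p pM tp] := H2 x xS; apply/existsP; exists p; rewrite pM.
by apply/negbTE/existsPn => p; apply/negP => /andP [pM tp]; move: (H3 x p xS pM); rewrite tp.
Qed.

Lemma haf_transport (R : comNzRingType) n N (f : 'I_n -> 'I_N) (B : 'M[R]_N)
  (S : {set 'I_N}) :
  (forall i j, (f i < f j)%N = (i < j)%N) -> S = f @: setT ->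
  haf (\matrix_(i, j) B (f i) (f j)) = \sum_(M | PMon S M) \prod_(p in M) B p.1 p.2.
Proof.
move=> hf hS.
have fI : injective f.
  move=> i j e; apply: val_inj => /=; have h1 := hf i j; have h2 := hf j i.
  by rewrite e ltnn in h1 h2; apply: anti_leq; rewrite leqNgt -h2 /= leqNgt -h1.
pose g := fun q : 'I_n * 'I_n => (f q.1, f q.2).
have gI : injective g by move=> [a b] [c d] [/fI -> /fI ->].
have tg : forall i q, touch (f i) (g q) = touch i q.
  by move=> i q; rewrite /touch /= !(inj_eq fI).
rewrite /haf.
transitivity (\sum_(M in [set M | PMon setT M]) \prod_(q in g @: M) B q.1 q.2).
  apply: eq_big => M; first by rewrite inE pm_setT.
  move=> _; rewrite big_imset /=; last by move=> ? ? _ _; apply: gI.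
  by apply: eq_bigr => p _; rewrite mxE.
rewrite -(big_imset (fun M : {set 'I_N * 'I_N} => \prod_(q in M) B q.1 q.2)); last first.
  by move=> ? ? _ _; apply: imset_inj.
apply: eq_bigl => M'; apply/imsetP/idP.
- move=> [M]; rewrite inE => /PMonP [H1 H2 H3 H4] ->; apply/PMonP; split.
  + by move=> p /imsetP [q qM ->] /=; rewrite hf; apply: H1.
  + move=> x; rewrite hS => /imsetP [i _ ->].
    have [q qM tq] := H2 i (in_setT i); exists (g q); first exact: imset_f.
    by rewrite tg.
  + move=> x p xS /imsetP [q qM ->]; apply/negP; rewrite /touch /= => /orP [] /eqP ex;
      by move: xS; rewrite hS -ex imset_f.
  + move=> x p p' /imsetP [q qM ->] /imsetP [q' q'M ->] tp tp'.
    have : x \in S.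
      by move: tp; rewrite /touch /= hS => /orP [] /eqP <-; rewrite imset_f.
    rewrite hS => /imsetP [i _ ex]; rewrite ex !tg in tp tp'.
    by rewrite (H4 i q q').
- move=> HM; have [H1 H2 H3 H4] := iffLR (PMonP _ _) HM.
  have inim : forall p, p \in M' -> exists q, p = g q.
    move=> p pM; have [s1 s2] := PMon_sub HM pM.
    move: s1 s2; rewrite hS => /imsetP [i _ e1] /imsetP [j _ e2].
    by exists (i, j); rewrite /g /= -e1 -e2; case: p {pM} e1 e2.
  exists (g @^-1: M'); last first.
    apply/setP => p; apply/idP/imsetP => [pM|[q]]; last by rewrite inE => ? ->.
    by have [q eq] := inim p pM; exists q; rewrite // inE -eq.
  rewrite inE; apply/PMonP; split.
  + by move=> q; rewrite inE => /H1; rewrite /= hf.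
  + move=> i _; have := H2 (f i); rewrite hS imset_f // => /(_ isT) [p pM tp].
    have [q eq] := inim p pM; exists q; first by rewrite inE -eq.
    by rewrite -tg -eq.
  + by move=> x p; rewrite in_setT.
  + move=> i q q'; rewrite !inE => qM q'M tq tq'; apply: gI; apply: (H4 (f i)) => //;
    by rewrite tg.
Qed.
Lemma homo_mono n (h : 'I_n -> nat) :
  (forall i j : 'I_n, (i < j)%N -> (h i < h j)%N) ->
  forall i j, (h i < h j)%N = (i < j)%N.
Proof.
move=> H i j; case: (ltngtP i j) => [ij|ji|/val_inj ->]; [by rewrite H| |by rewrite !ltnn].
by apply/negbTE; rewrite -leqNgt ltnW // H.
Qed.

Lemma princ_haf (R : comNzRingType) m k (A : 'M[R]_m) (alpha : {set 'I_m})
  (H : #|alpha| = (2 * k)%N) :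
  haf (princ_submx k A alpha) = \sum_(M | PMon alpha M) \prod_(p in M) A p.1 p.2.
Proof.
pose f (i : 'I_(2 * k)) : 'I_m := enum_val (cast_ord (esym H) i).
have srt : sorted ltn [seq val x | x <- enum alpha].
  apply: (subseq_sorted ltn_trans (s2 := iota 0 m)); last exact: iota_ltn_sorted.
  rewrite -val_enum_ord; apply: map_subseq.
  rewrite /enum_mem [X in subseq _ X](@eq_filter _ _ predT) // filter_predT.
  exact: filter_subseq.
have nthE : forall i : 'I_(2 * k), nth 0%N (sort leq [seq val x | x <- enum alpha]) i = val (f i).
  move=> i; rewrite sorted_sort; last first.
    by apply: sub_sorted srt => a b /ltnW.
    exact: leq_trans.
  rewrite (nth_map (f i)); last by rewrite -cardE H.
  by congr val; rewrite [in RHS]/f (enum_val_nth (f i)).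
have -> : princ_submx k A alpha = \matrix_(i, j) A (f i) (f j).
  by apply/matrixP => i j; rewrite !mxE !nthE /mx_at !valK.
apply: haf_transport.
  apply: homo_mono => i j ij; rewrite -!nthE sorted_sort; last first.
    by apply: sub_sorted srt => a b /ltnW.
    exact: leq_trans.
  apply: (sorted_ltn_nth ltn_trans) => //; rewrite inE size_map -cardE H //.
apply/setP => x; apply/idP/imsetP => [xA|[i _ ->]]; last exact: enum_valP.
by exists (cast_ord H (enum_rank_in xA x)) => //; rewrite /f cast_ordK enum_rankK_in.
Qed.
Lemma hafk_sum (R : comNzRingType) m k (A : 'M[R]_m) :
  haf_k k A = \sum_(M | (#|V M| == 2 * k)%N && PMon (V M) M) \prod_(p in M) A p.1 p.2.
Proof.
rewrite /haf_k.
transitivity (\sum_(alpha : {set 'I_m} | #|alpha| == (2 * k)%N)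
               \sum_(M | PMon alpha M) \prod_(p in M) A p.1 p.2).
  by apply: eq_bigr => alpha /eqP H; exact: princ_haf.
symmetry; rewrite (partition_big (@V m) (fun alpha : {set 'I_m} => #|alpha| == (2 * k)%N));
  last by move=> M /andP [].
apply: eq_bigr => alpha /eqP H; apply: eq_bigl => M.
apply/idP/idP => [/andP [/andP [_ HM] /eqP <-] //|HM].
by rewrite (PMon_V HM) HM eqxx !andbT; apply/eqP.
Qed.


Definition ll m n (q : 'I_m * 'I_m) : 'I_(m + n) * 'I_(m + n) :=
  (lshift n q.1, lshift n q.2).
Definition restr m n (M : {set 'I_(m + n) * 'I_(m + n)}) : {set 'I_m * 'I_m} :=
  (@ll m n) @^-1: M.
Definition good m n (M : {set 'I_(m + n) * 'I_(m + n)}) :=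
  [forall p in M, (p.1 < m)%N].
Definition pp m n (i0 : 'I_m) (M : {set 'I_(m + n) * 'I_(m + n)}) (j : 'I_n) : 'I_m :=
  odflt i0 [pick i | (lshift n i, rshift m j) \in M].
Definition ext m n (M' : {set 'I_m * 'I_m}) (f : 'I_n -> 'I_m) :
   {set 'I_(m + n) * 'I_(m + n)} :=
  (@ll m n) @: M' :|: [set (lshift n (f j), rshift m j) | j in [set: 'I_n]].

Lemma lrsh_neq m n (i : 'I_m) (j : 'I_n) : (lshift n i == rshift m j) = false.
Proof.
apply/negbTE/eqP => /(congr1 val) /= e; have := ltn_ord i.
by rewrite e ltnNge leq_addr.
Qed.

Lemma rlsh_neq m n (i : 'I_m) (j : 'I_n) : (rshift m j == lshift n i) = false.
Proof. by rewrite eq_sym lrsh_neq. Qed.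

Lemma split_lt m n (x : 'I_(m + n)) : (x < m)%N -> {i : 'I_m | x = lshift n i}.
Proof. by move=> h; exists (Ordinal h); apply: val_inj. Qed.

Lemma split_ge m n (x : 'I_(m + n)) : (m <= x)%N -> {j : 'I_n | x = rshift m j}.
Proof.
move=> h; have h' : (x - m < n)%N by rewrite ltn_subLR // ltn_ord.
by exists (Ordinal h'); apply: val_inj; rewrite /= subnKC.
Qed.

Lemma ll_inj m n : injective (@ll m n).
Proof.
move=> [a b] [c d] e; have /= e1 := congr1 fst e; have /= e2 := congr1 snd e.
by rewrite (lshift_inj e1) (lshift_inj e2).
Qed.

Lemma touch_ll_l m n (i : 'I_m) q : touch (lshift n i) (ll n q) = touch i q.
Proof. by rewrite /touch /= !(inj_eq (@lshift_inj m n)). Qed.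

Lemma touch_ll_r m n (j : 'I_n) (q : 'I_m * 'I_m) : touch (rshift m j) (ll n q) = false.
Proof. by rewrite /touch /= !lrsh_neq. Qed.

Lemma touch_pr_l m n (i a : 'I_m) (b : 'I_n) :
  touch (lshift n i) (lshift n a, rshift m b) = (a == i).
Proof. by rewrite /touch /= (inj_eq (@lshift_inj m n)) rlsh_neq orbF. Qed.

Lemma touch_pr_r m n (j b : 'I_n) (a : 'I_m) :
  touch (rshift m j) (lshift n a, rshift m b) = (b == j).
Proof. by rewrite /touch /= (inj_eq (@rshift_inj m n)) lrsh_neq. Qed.

Lemma ext_mem m n (M' : {set 'I_m * 'I_m}) (f : 'I_n -> 'I_m) p :
  p \in ext M' f <->
  (exists2 q, q \in M' & p = ll n q) \/ (exists j, p = (lshift n (f j), rshift m j)).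
Proof.
rewrite /ext; split.
  by case/setUP => /imsetP [x xM ->]; [left; exists x|right; exists x].
case=> [[q qM ->]|[j ->]]; apply/setUP; [left|right]; apply/imsetP.
  by exists q.
by exists j.
Qed.
Lemma pp_mem m n (i0 : 'I_m) (M : {set 'I_(m + n) * 'I_(m + n)}) :
  PMon setT M -> good M -> forall j, (lshift n (pp i0 M j), rshift m j) \in M.
Proof.
move=> /PMonP [H1 H2 H3 H4] /forall_inP hg j.
have [p pM tp] := H2 (rshift m j) (in_setT _).
have p1m := hg p pM.
have e2 : p.2 = rshift m j.
  move: tp; rewrite /touch => /orP [] /eqP // e; move: p1m; rewrite e /=.
  by rewrite ltnNge leq_addr.
have [i e1] := split_lt p1m.
have ex : (lshift n i, rshift m j) \in M by rewrite -e1 -e2 -surjective_pairing.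
rewrite /pp; case: pickP => [i' //|H0]; by have := H0 i; rewrite ex.
Qed.

Lemma pp_inj m n (i0 : 'I_m) (M : {set 'I_(m + n) * 'I_(m + n)}) :
  PMon setT M -> good M -> injective (pp i0 M).
Proof.
move=> HM hg j1 j2 e.
have h1 := pp_mem i0 HM hg j1; have h2 := pp_mem i0 HM hg j2.
case/PMonP: HM => _ _ _ H4.
have := H4 (lshift n (pp i0 M j1)) _ _ h1 h2.
by rewrite !touch_pr_l e eqxx => /(_ isT isT) /(congr1 snd) /= /rshift_inj.
Qed.

Lemma pp_ext m n (i0 : 'I_m) (M : {set 'I_(m + n) * 'I_(m + n)}) :
  PMon setT M -> good M -> M = ext (restr M) (pp i0 M).
Proof.
move=> HM hg; have hP := pp_mem i0 HM hg.
have [H1 H2 H3 H4] := iffLR (PMonP _ _) HM.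
apply/setP => p; apply/idP/idP => [pM|/ext_mem [[q qM ->]|[j ->]]] //; last first.
  by move: qM; rewrite inE.
apply/ext_mem; have p1m := (forall_inP hg) p pM.
case: (ltnP p.2 m) => hp2.
  have [i1 e1] := split_lt p1m; have [i2 e2] := split_lt hp2.
  left; exists (i1, i2); last by rewrite /ll /= -e1 -e2 -surjective_pairing.
  by rewrite inE /ll /= -e1 -e2 -surjective_pairing.
right; have [i e1] := split_lt p1m; have [j e2] := split_ge hp2.
exists j; apply: (H4 (rshift m j)) => //; last by rewrite touch_pr_r.
by rewrite /touch e2 eqxx orbT.
Qed.

Lemma pp_restr m n (i0 : 'I_m) (M : {set 'I_(m + n) * 'I_(m + n)}) :
  PMon setT M -> good M -> PMon (~: (pp i0 M @: setT)) (restr M).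
Proof.
move=> HM hg; have hP := pp_mem i0 HM hg; have hE := pp_ext i0 HM hg.
have [H1 H2 H3 H4] := iffLR (PMonP _ _) HM.
apply/PMonP; split.
- by move=> q; rewrite inE => /H1.
- move=> i; rewrite inE => hi.
  have [p pM tp] := H2 (lshift n i) (in_setT _).
  have pE : p \in ext (restr M) (pp i0 M) by rewrite -hE.
  case/ext_mem: pE => [[q qM ep]|[j ep]].
    by exists q => //; rewrite -(touch_ll_l n) -ep.
  move: tp; rewrite ep touch_pr_l => /eqP e.
  by move: hi; rewrite -e imset_f.
- move=> i q; rewrite inE negbK => /imsetP [j _ ->]; rewrite inE => qM.
  apply/negP => tq.
  have := H4 (lshift n (pp i0 M j)) _ _ qM (hP j).
  rewrite touch_ll_l touch_pr_l eqxx => /(_ tq isT) /(congr1 snd) /= /eqP.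
  by rewrite lrsh_neq.
- move=> i q q'; rewrite !inE => qM q'M tq tq'; apply: (@ll_inj m n).
  by apply: (H4 (lshift n i)); rewrite ?touch_ll_l.
Qed.
Lemma ext_eq m n (M' : {set 'I_m * 'I_m}) (f g : 'I_n -> 'I_m) :
  f =1 g -> ext M' f = ext M' g.
Proof. by move=> e; rewrite /ext; congr (_ :|: _); apply: eq_imset => j; rewrite e. Qed.

Lemma ext_ok m n (M' : {set 'I_m * 'I_m}) (S : {set 'I_m}) (f : 'I_n -> 'I_m) :
  PMon S M' -> injective f -> (forall j, f j \notin S) -> #|~: S| = n ->
  [/\ PMon setT (ext M' f), good (ext M' f) & restr (ext M' f) = M'].
Proof.
move=> HS hfi hfS hC.
have [H1 H2 H3 H4] := iffLR (PMonP _ _) HS.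
have fsurj : forall i, i \notin S -> exists j, i = f j.
  move=> i iS.
  have sub : f @: setT \subset ~: S.
    by apply/subsetP => x /imsetP [j _ ->]; rewrite inE hfS.
  have cE : #|f @: setT| = #|~: S| by rewrite card_imset // cardsT card_ord hC.
  have : i \in f @: setT by rewrite ((subset_cardP cE sub) i) inE iS.
  by case/imsetP => j _ ->; exists j.
have inS : forall i q, q \in M' -> touch i q -> i \in S.
  move=> i q qM tq; apply/negPn/negP => iS.
  by move: (H3 i q iS qM); rewrite tq.
split.
- apply/PMonP; split.
  + move=> p /ext_mem [[q qM ->]|[j ->]] /=; first exact: H1 q qM.
    exact: (leq_trans (ltn_ord _) (leq_addr _ _)).
  + move=> x _; case: (ltnP x m) => hx.
    * have [i ->] := split_lt hx; case: (boolP (i \in S)) => iS.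
      - have [q qM tq] := H2 i iS; exists (ll n q); last by rewrite touch_ll_l.
        by apply/ext_mem; left; exists q.
      - have [j ->] := fsurj i iS; exists (lshift n (f j), rshift m j).
          by apply/ext_mem; right; exists j.
        by rewrite touch_pr_l.
    * have [j ->] := split_ge hx; exists (lshift n (f j), rshift m j).
        by apply/ext_mem; right; exists j.
      by rewrite touch_pr_r.
  + by move=> x p; rewrite in_setT.
  + move=> x p p' hp hp'; case: (ltnP x m) => hx.
    * have [i ->] := split_lt hx.
      case/ext_mem: hp => [[q qM ->]|[j ->]]; case/ext_mem: hp' => [[q' q'M ->]|[j' ->]];
        move=> tp tp'; rewrite ?touch_ll_l ?touch_pr_l in tp tp'.
      - by rewrite (H4 i q q').
      - by move: (hfS j'); rewrite (eqP tp') (inS i q qM tp).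
      - by move: (hfS j); rewrite (eqP tp) (inS i q' q'M tp').
      - by rewrite (hfi j j') // (eqP tp) (eqP tp').
    * have [j0 ->] := split_ge hx => tp tp'.
      case/ext_mem: hp => [[q qM ep]|[j ep]]; first by rewrite ep touch_ll_r in tp.
      case/ext_mem: hp' => [[q' q'M ep']|[j' ep']]; first by rewrite ep' touch_ll_r in tp'.
      rewrite ep ep'; rewrite ep touch_pr_r in tp; rewrite ep' touch_pr_r in tp'.
      by rewrite (eqP tp) (eqP tp').
- apply/forall_inP => p /ext_mem [[q _ ->]|[j ->]] /=; exact: ltn_ord.
- apply/setP => q; rewrite inE; apply/idP/idP => [/ext_mem [[q' q'M e]|[j e]] | qM].
  + by rewrite (@ll_inj m n _ _ e).
  + by move: e => /(congr1 snd) /= /eqP; rewrite lrsh_neq.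
  + by apply/ext_mem; left; exists q.
Qed.
Lemma fiber_card m n (i0 : 'I_m) (M' : {set 'I_m * 'I_m}) (S : {set 'I_m}) :
  PMon S M' -> #|~: S| = n ->
  #|[set M : {set 'I_(m + n) * 'I_(m + n)} |
        PMon setT M && good M && (restr M == M')]| = n`!.
Proof.
move=> HS hC.
pose Rp := fun i : 'I_m => i \notin S.
pose injset := [set f : {ffun 'I_n -> 'I_m} in ffun_on Rp | injectiveb f].
have cI : #|injset| = n`!.
  rewrite card_inj_ffuns_on card_ord -ffactnn; congr (_ ^_ _).
  by rewrite -hC; apply: eq_card => i; rewrite !inE.
have -> : [set M : {set 'I_(m + n) * 'I_(m + n)} |
        PMon setT M && good M && (restr M == M')] =
          (fun f : {ffun 'I_n -> 'I_m} => ext M' f) @: injset.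
  apply/setP => M; rewrite inE; apply/idP/imsetP.
  - case/andP => /andP [HM hg] /eqP hr; exists [ffun j => pp i0 M j].
      rewrite inE; apply/andP; split.
        apply/ffun_onP => j; rewrite ffunE /Rp.
        have VS : S = ~: (pp i0 M @: setT).
          by rewrite -(PMon_V HS) -hr (PMon_V (pp_restr i0 HM hg)).
        by rewrite unfold_in /= VS inE negbK imset_f.
      by apply/injectiveP => j1 j2; rewrite !ffunE; exact: pp_inj.
    by rewrite {1}(pp_ext i0 HM hg) hr; apply: ext_eq => j; rewrite ffunE.
  - case=> f; rewrite inE => /andP [/ffun_onP hfS /injectiveP hfi] ->.
    have [a b c] := ext_ok HS hfi hfS hC.
    by rewrite a b c eqxx.
rewrite card_in_imset // => f1 f2; rewrite !inE.
move=> /andP [_ /injectiveP i1] /andP [_ /injectiveP i2] e; apply/ffunP => j.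
have : (lshift n (f1 j), rshift m j) \in ext M' f2.
  by rewrite -e; apply/ext_mem; right; exists j.
case/ext_mem => [[q _ /(congr1 snd) /= /eqP]|[j' ep]]; first by rewrite rlsh_neq.
have /= e2 := congr1 snd ep; have /= e1 := congr1 fst ep.
by move: e1; rewrite -(rshift_inj e2) => /lshift_inj.
Qed.
Lemma hafAk (R : comNzRingType) m k (A : 'M[R]_m) (i0 : 'I_m) :
  (2 * k <= m)%N ->
  haf (A_k k A) =
  (\sum_(M | (#|V M| == 2 * k)%N && PMon (V M) M) \prod_(p in M) A p.1 p.2)
     *+ (m - 2 * k)`!.
Proof.
move=> hk; set n := (m - 2 * k)%N.
have hmn : (m - n)%N = (2 * k)%N by rewrite /n subKn.
rewrite /haf.
under eq_bigl do rewrite pm_setT.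
rewrite (bigID (@good m n)) /=.
rewrite [X in _ + X]big1 ?addr0; last first.
  move=> M /andP [HM /forall_inPn [p pM hp]].
  have [H1 _ _ _] := iffLR (PMonP _ _) HM.
  have hp' : (m <= p.1)%N by rewrite leqNgt.
  have [a ea] := split_ge hp'.
  have [b eb] := split_ge (leq_trans hp' (ltnW (H1 p pM))).
  rewrite (bigD1 p) //= ea eb /A_k block_mxEdr mxE mul0r //.
rewrite -sumrMnl.
rewrite (partition_big (@restr m n)
   (fun M' : {set 'I_m * 'I_m} => (#|V M'| == 2 * k)%N && PMon (V M') M')) /=;
  last first.
  move=> M /andP [HM hg].
  have HR := pp_restr i0 HM hg.
  rewrite (PMon_V HR) HR andbT.
  have cI : #|pp i0 M @: setT| = n by rewrite card_imset ?cardsT ?card_ord //; apply: pp_inj.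
  have := cardsC (pp i0 M @: setT); rewrite cI card_ord => e.
  by apply/eqP/(@addnI n); rewrite e -hmn subnKC // leq_subr.
apply: eq_bigr => M' /andP [hc HS].
transitivity (\sum_(M in [set M : {set 'I_(m + n) * 'I_(m + n)} |
        PMon setT M && good M && (restr M == M')]) \prod_(p in M') A p.1 p.2).
  apply: eq_big => [M|M]; first by rewrite inE.
  move=> /andP [/andP [HM hg] /eqP <-].
  rewrite (bigID (fun p : 'I_(m + n) * 'I_(m + n) => (p.2 < m)%N)) /=.
  rewrite [X in _ * X]big1 ?mulr1; last first.
    move=> p /andP [pM hp2]; have {}hp2 : (m <= p.2)%N by rewrite leqNgt.
    have [a ea] := split_lt ((forall_inP hg) p pM).
    have [b eb] := split_ge hp2.
    by rewrite ea eb /A_k block_mxEur mxE.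
  transitivity (\prod_(p in ll n @: restr M) A_k k A p.1 p.2).
    apply: eq_bigl => p; apply/andP/imsetP.
    - move=> [pM hp2]; have [H1 _ _ _] := iffLR (PMonP _ _) HM.
      have [i1 e1] := split_lt ((forall_inP hg) p pM).
      have [i2 e2] := split_lt hp2.
      exists (i1, i2); last by rewrite /ll /= -e1 -e2 -surjective_pairing.
      by rewrite inE /ll /= -e1 -e2 -surjective_pairing.
    - by move=> [q]; rewrite inE => qM ->; split => //=.
  rewrite big_imset; last by move=> ? ? _ _; apply: ll_inj.
  by apply: eq_bigr => q _; rewrite /A_k /ll /= block_mxEul.
rewrite sumr_const; congr (_ *+ _).
apply: (fiber_card i0 HS).
have := cardsC (V M'); rewrite (eqP hc) card_ord => e.
by apply/eqP; rewrite -(eqn_add2l (2 * k)) e /n subnKC.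
Qed.

Unset Implicit Arguments.
Set Strict Implicit.

Theorem theorem3p1 (R : realFieldType) (m : nat) (A : 'M[R]_m) (k : nat)
  (hm : (2 <= m)%N)
  (hsym : A^T = A)
  (hdiag : forall i : 'I_m, A i i = 0)
  (hnneg : forall i j : 'I_m, 0 <= A i j)
  (hk1 : (1 <= k)%N) (hk2 : (k <= m./2)%N) :
  haf_k k A = haf (A_k k A) / ((m - 2 * k)`!)%:R.
Proof.
have hm0 : (0 < m)%N by apply: leq_trans hm.
have hk : (2 * k <= m)%N.
  have := odd_double_half m; rewrite -muln2 => e.
  apply: (leq_trans _ (_ : (m./2 * 2 <= m)%N)); first by rewrite mulnC leq_pmul2r.
  by rewrite -{2}e leq_addl.
rewrite (hafAk A (Ordinal hm0) hk) hafk_sum -mulr_natr mulfK //.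
by rewrite pnatr_eq0 -lt0n fact_gt0.
Qed.
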